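(* Fix parameters $T>0$, $T_f>0$, $f_e>0$, $c_0>0$, $W>0$, a probability density $f$ on $(0,\infty)$, and a number $D_e\ge 0$ with $T-\frac{c_0D_e}{f_e}>0$. Define $$N(D_e)=\left\lceil \frac{Tf_e-c_0D_e}{T_f f_e}\right\rceil,\qquad t_1(D_e)=\Big(T-\frac{c_0D_e}{f_e}\Big)-\Big\lceil \Big(T-\frac{c_0D_e}{f_e}\Big)/T_f\Big\rceil T_f+T_f ,$$ and for $d\ge 0$, $h>0$, $t>0$ let $e(d,h,t,W)=\frac{t\,(e^{d/(tW)}-1)}{h}$. Define recursively, for $d\ge 0$ and $h>0$, $$J_1(d,h)=e(d,h,t_1(D_e),W),\qquad J_n(d)=\int_0^\infty J_n(d,h)f(h)\,dh\ (n\ge 1),$$ $$J_n(d,h)=\min_{0\le x\le d}\Big(e(x,h,T_f,W)+J_{n-1}(d-x)\Big)\quad (n\ge 2).$$ Then for every $n\in\{1,2,\dots,N(D_e)-1\}$, the function $d\mapsto J_n(d)$ is convex on $[0,D_e]$, and for every $h>0$ the function $d\mapsto J_n(d,h)$ is convex on $[0,D_e]$.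
   Context: Model: a mobile device offloads $D_e$ data nats to a base station over block-fading blocks of duration $T_f$, indexed backwards so that offloading starts in block $N(D_e)$ and ends in block $1$; the base station needs time $c_0D_e/f_e$ to compute, so transmission must finish within $T-c_0D_e/f_e$; block $1$ has transmission time $t_1(D_e)\in(0,T_f]$ and all other blocks have transmission time $T_f$. The normalized channel gain $h$ is i.i.d. across blocks with density $f$. $e(d,h,t,W)$ is the energy to send $d$ nats in time $t$ over bandwidth $W$ with normalized gain $h$ (Shannon capacity). $J_n(d)$ is the minimal expected energy to send $d$ nats over blocks $n,\dots,1$ and $J_n(d,h)$ the same conditioned on the gain $h$ in block $n$. The functions $J_n$ take values in $[0,+\infty]$ (the minimum is understood as an infimum), and convexity is meant in the usual sense for extended-real-valued functions. *)

(* Defs.v *)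
From HB Require Import structures.
From mathcomp Require Import all_boot all_order all_algebra.
From mathcomp Require Import all_classical all_reals all_analysis.
Set Implicit Arguments. Unset Strict Implicit. Unset Printing Implicit Defensive.
Import Order.TTheory GRing.Theory Num.Theory.
Local Open Scope classical_set_scope.
Local Open Scope ring_scope.

Section Offload.
Variable R : realType.

Definition energy (d h t W : R) : R := t * (expR (d / (t * W)) - 1) / h.

Definition Nblocks (T Tf fe c0 De : R) : int :=
  Num.ceil ((T * fe - c0 * De) / (Tf * fe)).

Definition t1 (T Tf fe c0 De : R) : R :=
  let T' := T - c0 * De / fe in
  T' - (Num.ceil (T' / Tf))%:~R * Tf + Tf.

Definition expect (f : R -> R) (g : R -> \bar R) : \bar R :=
  (\int[lebesgue_measure]_(h in `]0%R, +oo[) (g h * (f h)%:E))%E.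

(* Jh n d h = J_n(d,h) ; J_0 is never used (set to 0). *)
Fixpoint Jh (T Tf fe c0 W De : R) (f : R -> R) (n : nat) : R -> R -> \bar R :=
  match n with
  | 0%N => fun _ _ => 0%E
  | 1%N => fun d h => (energy d h (t1 T Tf fe c0 De) W)%:E
  | m.+1 => fun d h =>
      ereal_inf [set ((energy x h Tf W)%:E
                       + expect f (Jh T Tf fe c0 W De f m (d - x)))%E
                | x in `[0, d]]
  end.

Definition Jd (T Tf fe c0 W De : R) (f : R -> R) (n : nat) (d : R) : \bar R :=
  expect f (Jh T Tf fe c0 W De f n d).

Definition convex_on_0D (D : R) (g : R -> \bar R) : Prop :=
  forall x y (l : R), x \in `[0, D] -> y \in `[0, D] -> 0 < l < 1 ->
    (g (l * x + (1 - l) * y)%R <= l%:E * g x + (1 - l)%:E * g y)%E.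

Definition prob_density (f : R -> R) : Prop :=
  measurable_fun (`]0%R, +oo[ : set R) f /\ (forall h, 0 < h -> 0 <= f h) /\
  (\int[lebesgue_measure]_(h in `]0%R, +oo[) (f h)%:E = 1)%E.

End Offload.

(* Main.v *)
Require Import Defs.
From HB Require Import structures.
From mathcomp Require Import all_boot all_order all_algebra.
From mathcomp Require Import all_classical all_reals all_analysis.
From mathcomp Require Import ring lra measurable_realfun.
Import Order.TTheory GRing.Theory Num.Theory.
Local Open Scope classical_set_scope.
Local Open Scope ring_scope.

Section Helpers.
Variable R : realType.

Lemma t1_gt0 (T Tf fe c0 De : R) : 0 < Tf -> 0 < t1 T Tf fe c0 De.
Proof.
move=> hTf; rewrite /t1.
set T' := T - c0 * De / fe.
have := ceilB1_lt (T' / Tf).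
rewrite intrB /= ltr_pdivlMr // => h.
lra.
Qed.

Lemma energy_ge0 (d h t W : R) : 0 <= d -> 0 < t -> 0 < h -> 0 < W ->
  0 <= energy d h t W.
Proof.
move=> d0 t0 h0 W0; rewrite /energy.
have : 0 <= d / (t * W) by rewrite divr_ge0 // mulr_ge0 // ltW.
move=> /= hx; have := expR_ge1Dx (d / (t * W)) => he.
apply: divr_ge0; last exact: ltW.
apply: mulr_ge0; [exact: ltW| lra].
Qed.

Lemma expR_convex (u v l : R) : 0 < l < 1 ->
  expR (l * u + (1 - l) * v) <= l * expR u + (1 - l) * expR v.
Proof.
move=> /andP[l0 l1].
set z := l * u + (1 - l) * v.
have Eu : expR z * (1 + (u - z)) <= expR u.
  have -> : expR u = expR z * expR (u - z) by rewrite -expRD; congr expR; ring.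
  by rewrite ler_wpM2l ?expR_ge1Dx // ltW // expR_gt0.
have Ev : expR z * (1 + (v - z)) <= expR v.
  have -> : expR v = expR z * expR (v - z) by rewrite -expRD; congr expR; ring.
  by rewrite ler_wpM2l ?expR_ge1Dx // ltW // expR_gt0.
have : l * (expR z * (1 + (u - z))) + (1 - l) * (expR z * (1 + (v - z)))
   <= l * expR u + (1 - l) * expR v.
  apply: lerD; apply: ler_wpM2l => //; lra.
have -> : l * (expR z * (1 + (u - z))) + (1 - l) * (expR z * (1 + (v - z)))
   = expR z * (1 + (l * u + (1 - l) * v - z)) by ring.
by rewrite /z subrr addr0 mulr1.
Qed.

Lemma energy_convex (x y h t W l : R) : 0 < t -> 0 < h -> 0 < W -> 0 < l < 1 ->
  energy (l * x + (1 - l) * y) h t W <=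
  l * energy x h t W + (1 - l) * energy y h t W.
Proof.
move=> t0 h0 W0 lin.
rewrite /energy.
have -> : (l * x + (1 - l) * y) / (t * W) =
   l * (x / (t * W)) + (1 - l) * (y / (t * W)) by rewrite mulrDl !mulrA.
have := expR_convex (x / (t * W)) (y / (t * W)) l lin.
set eu := expR (x / (t * W)); set ev := expR (y / (t * W)).
set ez := expR _ => H.
have k0 : 0 < t / h by rewrite divr_gt0.
rewrite !(mulrAC t _ h^-1).
move: (t / h) k0 => k k0.
move: lin => /andP[l0 l1].
nra.
Qed.

Lemma energy_noninc (d h1 h2 t W : R) : 0 <= d -> 0 < t -> 0 < W ->
  0 < h1 -> h1 <= h2 -> energy d h2 t W <= energy d h1 t W.
Proof.
move=> d0 t0 W0 h10 h12.
have h20 : 0 < h2 by apply: lt_le_trans h12.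
have := @energy_ge0 d 1 t W d0 t0 (ltr01) W0; rewrite /energy divr1 => n0.
rewrite ler_wpM2l // lef_pV2 ?posrE //.
Qed.

End Helpers.

Section Helpers2.
Variable R : realType.
Local Open Scope ereal_scope.

Lemma inf_comb (A B : set \bar R) (c : \bar R) (l : R) : (0 < l < 1)%R ->
  (forall a, A a -> 0 <= a) -> (forall b, B b -> 0 <= b) ->
  (forall a b, A a -> B b -> c <= l%:E * a + (1 - l)%:E * b) ->
  c <= l%:E * ereal_inf A + (1 - l)%:E * ereal_inf B.
Proof.
move=> /andP[l0 l1] A0 B0 H.
have neqNy x : 0 <= x -> x != -oo by move=> x0; rewrite gt_eqF // (lt_le_trans ltNy0 x0).
have iA0 : 0 <= ereal_inf A by apply/ereal_infP.
have iB0 : 0 <= ereal_inf B by apply/ereal_infP.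
have l'0 : (0 < 1 - l)%R by rewrite subr_gt0.
have lA0 : 0 <= l%:E * ereal_inf A by rewrite mule_ge0 // lee_fin ltW.
have lB0 : 0 <= (1 - l)%:E * ereal_inf B by rewrite mule_ge0 // lee_fin ltW.
case: (eqVneq (ereal_inf A) +oo) => [->|nA].
  rewrite gt0_muley ?lte_fin // addye ?leey //.
  exact: neqNy.
case: (eqVneq (ereal_inf B) +oo) => [->|nB].
  rewrite gt0_muley ?lte_fin // addey ?leey //.
  exact: neqNy.
have fA : ereal_inf A \is a fin_num by rewrite ge0_fin_numE // ltey.
have fB : ereal_inf B \is a fin_num by rewrite ge0_fin_numE // ltey.
move: fA fB; rewrite !fin_numE => /andP[_ /eqP _] /andP[_ /eqP _].
have [ra Era] : exists ra, ereal_inf A = ra%:E.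
  by move: nA iA0; case: (ereal_inf A) => // r; exists r.
have [rb Erb] : exists rb, ereal_inf B = rb%:E.
  by move: nB iB0; case: (ereal_inf B) => // r; exists r.
apply/lee_addgt0Pr => e e0.
have fA : ereal_inf A \is a fin_num by rewrite Era.
have fB : ereal_inf B \is a fin_num by rewrite Erb.
have [a Aa ha] := lb_ereal_inf_adherent e0 fA.
have [b Bb hb] := lb_ereal_inf_adherent e0 fB.
apply: (le_trans (H a b Aa Bb)).
rewrite Era in ha; rewrite Erb in hb.
have a0 := A0 a Aa; have b0 := B0 b Bb.
move: a ha Aa a0 b hb Bb b0 => [a| |] // ha _ a0 [b| |] // hb _ b0.
rewrite Era Erb -!EFinM -!EFinD lee_fin.
move: ha hb; rewrite -!EFinD !lte_fin => ha hb.
nra.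
Qed.

Lemma noninc_meas (g : R -> \bar R) :
  (forall h1 h2, (0 < h1)%R -> (h1 <= h2)%R -> g h2 <= g h1) ->
  measurable_fun (`]0%R, +oo[ : set R) g.
Proof.
move=> gni.
apply: (measurability _ (measurable_realfun.ErealGenOInfty.measurableE R)).
move=> /= _ [_ [r ->] <-].
apply: measurable_realfun.is_interval_measurable.
move=> x y [] /= x0 xr [] /= y0 yr z /andP[xz zy].
move: x0 y0 xr yr; rewrite !in_itv /= !andbT => x0 y0 xr yr; split => /=.
  exact: (lt_le_trans x0).
by apply: (lt_le_trans yr); apply: gni => //; apply: lt_le_trans xz.
Qed.

End Helpers2.

Section Main.
Variable R : realType.
Variables (T Tf fe c0 W De : R) (f : R -> R).
Hypotheses (hTf : 0 < Tf) (hW : 0 < W) (hf : prob_density f).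
Local Open Scope ereal_scope.

Let J := Jh T Tf fe c0 W De f.
Let t1p : (0 < t1 T Tf fe c0 De)%R := @t1_gt0 R T Tf fe c0 De hTf.

Lemma JhS m d h : J m.+2 d h = ereal_inf [set (energy x h Tf W)%:E +
   expect f (J m.+1 (d - x)) | x in `[0%R, d]].
Proof. by []. Qed.

Lemma Jh1 d h : J 1 d h = (energy d h (t1 T Tf fe c0 De) W)%:E.
Proof. by []. Qed.

Lemma memI (d x : R) : `[0%R, d]%classic x -> (0 <= x)%R /\ (x <= d)%R.
Proof. by rewrite /= in_itv /= => /andP. Qed.

Lemma f_ge0 h : (0 < h)%R -> (0 <= f h)%R.
Proof. by case: hf => _ [+ _]; apply. Qed.

Lemma expect_ge0 (g : R -> \bar R) : (forall h, (0 < h)%R -> 0 <= g h) ->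
  0 <= expect f g.
Proof.
move=> g0; rewrite /expect; apply: integral_ge0 => h /=.
rewrite in_itv /= andbT => h0.
by rewrite mule_ge0 ?g0 // lee_fin f_ge0.
Qed.

Lemma Jh_ge0 n d h : (0 <= d)%R -> (0 < h)%R -> 0 <= J n d h.
Proof.
elim: n d h => [|n IH] d h d0 h0; first by rewrite /J /=.
case: n IH => [|m] IH.
  by rewrite Jh1 lee_fin energy_ge0.
rewrite JhS; apply/ereal_infP => _ [x /memI[x0 xd] <-].
apply: adde_ge0; first by rewrite lee_fin energy_ge0.
by apply: expect_ge0 => hh hh0; apply: IH => //; rewrite subr_ge0.
Qed.

Lemma Jh_noninc n d : (0 <= d)%R -> forall h1 h2, (0 < h1)%R -> (h1 <= h2)%R ->
  J n d h2 <= J n d h1.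
Proof.
move=> d0 h1 h2 h10 h12.
case: n => [|[|m]]; first by rewrite /J /=.
  by rewrite !Jh1 lee_fin energy_noninc.
rewrite !JhS; apply/ereal_infP => _ [x xin <-].
apply: le_trans; first by apply: ereal_inf_lbound; exists x.
apply: leeD => //; rewrite lee_fin; apply: energy_noninc => //.
by case: (memI _ _ xin).
Qed.

Lemma integrand_meas n d : (0 <= d)%R ->
  measurable_fun (`]0%R, +oo[ : set R) (fun h => J n d h * (f h)%:E).
Proof.
move=> d0; apply: emeasurable_funM.
  by apply: noninc_meas => h1 h2; apply: Jh_noninc.
by apply/measurable_EFinP; case: hf.
Qed.


Lemma memC (D x : R) : x \in `[0%R, D] -> (0 <= x)%R /\ (x <= D)%R.
Proof. by rewrite in_itv /= => /andP. Qed.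

Lemma memCI (D x : R) : (0 <= x)%R -> (x <= D)%R -> x \in `[0%R, D].
Proof. by move=> a b; rewrite in_itv /= a b. Qed.

Lemma intZ (k : R) n d : (0 <= k)%R -> (0 <= d)%R ->
  \int[lebesgue_measure]_(h in (`]0%R, +oo[ : set R)) (k%:E * (J n d h * (f h)%:E)) =
  k%:E * \int[lebesgue_measure]_(h in (`]0%R, +oo[ : set R)) (J n d h * (f h)%:E).
Proof.
move=> k0 d0.
have Hpos (h : R) : `]0%R, +oo[%classic h -> (0 < h)%R by rewrite /= in_itv /= andbT.
eapply ge0_integralZl_EFin.
- exact: measurable_itv.
- by move=> h /Hpos h0; rewrite mule_ge0 ?Jh_ge0 // lee_fin ?f_ge0.
- exact: integrand_meas.
- exact: k0.
Qed.

Lemma Jd_convex n : (forall h, (0 < h)%R -> convex_on_0D De (fun d => J n d h)) ->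
  convex_on_0D De (Jd T Tf fe c0 W De f n).
Proof.
move=> Hc x y l xin yin lin.
have [x0 xD] := memC _ _ xin; have [y0 yD] := memC _ _ yin.
have /andP[l0 l1] := lin.
have l'0 : (0 < 1 - l)%R by rewrite subr_gt0.
have z0 : (0 <= l * x + (1 - l) * y)%R by rewrite addr_ge0 // mulr_ge0 // ltW.
rewrite /Jd /expect.
have mD : measurable (`]0%R, +oo[ : set R) by [].
have Hpos (h : R) : `]0%R, +oo[%classic h -> (0 < h)%R by rewrite /= in_itv /= andbT.
apply: (@le_trans _ _ (\int[lebesgue_measure]_(h in (`]0%R, +oo[ : set R))
     (l%:E * (J n x h * (f h)%:E) + (1 - l)%:E * (J n y h * (f h)%:E)))).
  eapply ge0_le_integral.
  - exact: measurable_itv.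
  - by move=> h /Hpos h0; rewrite mule_ge0 ?Jh_ge0 // lee_fin f_ge0.
  - exact: integrand_meas.
  - apply: emeasurable_funD; apply: measurable_funeM; exact: integrand_meas.
  - move=> h /Hpos h0.
    rewrite !muleA -ge0_muleDl; last 2 first.
      by rewrite mule_ge0 ?Jh_ge0 // lee_fin ltW.
      by rewrite mule_ge0 ?Jh_ge0 // lee_fin ltW.
    apply: lee_wpmul2r; first by rewrite lee_fin f_ge0.
    exact: (Hc h h0 x y l xin yin lin).
rewrite ge0_integralD //; last 4 first.
- by move=> h /Hpos h0; rewrite mule_ge0 ?mule_ge0 ?Jh_ge0 // lee_fin ?f_ge0 // ltW.
- by apply: measurable_funeM; exact: integrand_meas.
- by move=> h /Hpos h0; rewrite mule_ge0 ?mule_ge0 ?Jh_ge0 // lee_fin ?f_ge0 // ltW.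
- by apply: measurable_funeM; exact: integrand_meas.
by rewrite !intZ // ltW.
Qed.

Lemma Jh_step m : convex_on_0D De (Jd T Tf fe c0 W De f m.+1) ->
  forall h, (0 < h)%R -> convex_on_0D De (fun d => J m.+2 d h).
Proof.
move=> HG h h0 x y l xin yin lin.
have [x0 xD] := memC _ _ xin; have [y0 yD] := memC _ _ yin.
have /andP[l0 l1] := lin.
have l'0 : (0 < 1 - l)%R by rewrite subr_gt0.
rewrite !JhS.
have elt0 d z : (0 <= z)%R -> (z <= d)%R ->
    0 <= (energy z h Tf W)%:E + expect f (J m.+1 (d - z)).
  move=> z0 zd; apply: adde_ge0; first by rewrite lee_fin energy_ge0.
  by apply: expect_ge0 => hh hh0; apply: Jh_ge0 => //; rewrite subr_ge0.
apply: inf_comb => //.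
- by move=> _ [z /memI[z0 zd] <-]; apply: elt0.
- by move=> _ [z /memI[z0 zd] <-]; apply: elt0.
move=> _ _ [x1 /memI[x10 x1x] <-] [y1 /memI[y10 y1y] <-].
set w := (l * x1 + (1 - l) * y1)%R.
apply: le_trans; first (apply: ereal_inf_lbound; exists w => //).
  rewrite /= in_itv /=; apply/andP; split.
    by rewrite /w addr_ge0 // mulr_ge0 // ltW.
  by rewrite /w lerD // ler_wpM2l // ltW.
have m1 : (x - x1)%R \in `[0%R, De].
  by apply: memCI; [rewrite subr_ge0 | rewrite lerBlDr (le_trans xD) // lerDl].
have m2 : (y - y1)%R \in `[0%R, De].
  by apply: memCI; [rewrite subr_ge0 | rewrite lerBlDr (le_trans yD) // lerDl].
have HGi := HG (x - x1)%R (y - y1)%R l m1 m2 lin.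
rewrite /Jd -/J in HGi.
have -> : (l * x + (1 - l) * y - w = l * (x - x1) + (1 - l) * (y - y1))%R.
  by rewrite /w; ring.
have G10 : 0 <= expect f (J m.+1 (x - x1)).
  by apply: expect_ge0 => hh hh0; apply: Jh_ge0 => //; rewrite subr_ge0.
have G20 : 0 <= expect f (J m.+1 (y - y1)).
  by apply: expect_ge0 => hh hh0; apply: Jh_ge0 => //; rewrite subr_ge0.
have Ec := @energy_convex R x1 y1 h Tf W l hTf h0 hW lin.
have E10 : (0 <= energy x1 h Tf W)%R by rewrite energy_ge0.
have E20 : (0 <= energy y1 h Tf W)%R by rewrite energy_ge0.
move: HGi G10 G20 Ec E10 E20.
move: (expect f (J m.+1 (x - x1))) (expect f (J m.+1 (y - y1))).
move: (expect f _) => G0 G1 G2 HGi G10 G20.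
move: (energy x1 h Tf W) (energy y1 h Tf W) (energy w h Tf W) => e1 e2 e0 Ec E10 E20.
rewrite !ge0_muleDr ?lee_fin //.
by rewrite addeACA; apply: leeD => //; rewrite -!EFinM -EFinD lee_fin.
Qed.

Lemma Jh_convex n : (1 <= n)%N ->
  forall h, (0 < h)%R -> convex_on_0D De (fun d => J n d h).
Proof.
case: n => // n _; elim: n => [|n IH].
  move=> h h0 x y l _ _ lin; rewrite !Jh1 -!EFinM -EFinD lee_fin.
  exact: energy_convex.
move=> h h0; exact: (Jh_step n (Jd_convex n.+1 IH) h h0).
Qed.

End Main.

Theorem lemma1 (R : realType) (T Tf fe c0 W De : R) (f : R -> R)
  (hT : 0 < T) (hTf : 0 < Tf) (hfe : 0 < fe) (hc0 : 0 < c0) (hW : 0 < W)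
  (hf : prob_density f) (hDe : 0 <= De) (hTDe : 0 < T - c0 * De / fe) :
  forall n : nat, (1 <= n)%N -> (n%:Z < Nblocks T Tf fe c0 De)%R ->
    convex_on_0D De (Jd T Tf fe c0 W De f n) /\
    (forall h : R, 0 < h -> convex_on_0D De (fun d => Jh T Tf fe c0 W De f n d h)).
Proof.
move=> n n1 _.
have H := @Jh_convex R T Tf fe c0 W De f hTf hW hf n n1.
split => //.
exact: (@Jd_convex R T Tf fe c0 W De f hTf hW hf n H).
Qed.
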